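(* Let $\mathbf{c}\in\mathbb{R}^n$, $\mathcal{K}=\{1,\dots,K\}$, and for each $k\in\mathcal{K}$ let $\mathcal{F}_k=\bigcup_{i\in\mathcal{D}_k}\mathcal{C}_{ki}$ with $\mathcal{D}_k$ finite and each $\mathcal{C}_{ki}\subset\mathbb{R}^n$ compact and convex. Let $z^*=\min\{\mathbf{c}^\top\mathbf{x}:\mathbf{x}\in\bigcap_{k\in\mathcal{K}}\mathcal{F}_k\}$. Let $\boldsymbol{\lambda}_1,\dots,\boldsymbol{\lambda}_K\in\mathbb{R}^n$ satisfy $\sum_{k\in\mathcal{K}}\boldsymbol{\lambda}_k=\mathbf{c}$. Let $\mathcal{P}=\{\mathcal{J}_1,\dots,\mathcal{J}_P\}$ be a partition of $\mathcal{K}$, let $\mathcal{Q}=\{1,\dots,P\}$, and for $q\in\mathcal{Q}$ let $\mathcal{F}_q'=\bigcap_{k\in\mathcal{J}_q}\mathcal{F}_k$, written in disjunctive normal form as the union of the compact convex sets $\bigcap_{k\in\mathcal{J}_q}\mathcal{C}_{k,i_k}$ over all choices $(i_k)_{k\in\mathcal{J}_q}\in\prod_{k\in\mathcal{J}_q}\mathcal{D}_k$. Define $$z^{HR}_{\mathcal{Q}}=\inf\{\mathbf{c}^\top\mathbf{x}:\ \mathbf{x}=\mathbf{v}_q,\ \mathbf{v}_q\in\operatorname{cl}\operatorname{conv}(\mathcal{F}'_q)\ \forall q\in\mathcal{Q}\},$$ $$z^{LD}_{\mathcal{Q}}=\sup_{\boldsymbol{\mu}_1,\dots,\boldsymbol{\mu}_P\in\mathbb{R}^n}\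 \inf\Big\{\big(\mathbf{c}-\textstyle\sum_q\boldsymbol{\mu}_q\big)^\top\mathbf{x}+\sum_q\boldsymbol{\mu}_q^\top\mathbf{v}_q:\ \mathbf{x}\in\mathbb{R}^n,\ \mathbf{v}_q\in\mathcal{F}'_q\ \forall q\Big\}.$$ Then $$z^*=L_{\{\mathcal{K}\}}\Big(\sum_{k\in\mathcal{K}}\boldsymbol{\lambda}_k\Big)\ \ge\ z^{HR}_{\mathcal{Q}}\ \ge\ z^{LD}_{\mathcal{Q}}\ \ge\ L_{\mathcal{P}}\Big(\sum_{j\in\mathcal{J}_1}\boldsymbol{\lambda}_j,\dots,\sum_{j\in\mathcal{J}_P}\boldsymbol{\lambda}_j\Big)\ \ge\ LR_{\mathcal{K}}(\boldsymbol{\lambda}_1,\dots,\boldsymbol{\lambda}_K),$$ with $z^{HR}_{\mathcal{Q}}=z^{LD}_{\mathcal{Q}}$ if optimal Lagrange multipliers $\boldsymbol{\mu}_1^*,\dots,\boldsymbol{\mu}_P^*$ for the constraints $\mathbf{x}=\mathbf{v}_q$ of the hull relaxation defining $z^{HR}_{\mathcal{Q}}$ exist.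
   Context: $\operatorname{cl}\operatorname{conv}$ is the closed convex hull; minima/infima over the empty set are $+\infty$. The Lagrangian relaxation is $LR_{\mathcal{K}}(\boldsymbol{\lambda}_1,\dots,\boldsymbol{\lambda}_K)=\inf\{(\mathbf{c}-\sum_k\boldsymbol{\lambda}_k)^\top\mathbf{x}+\sum_k\boldsymbol{\lambda}_k^\top\mathbf{v}_k:\mathbf{x}\in\mathbb{R}^n,\ \mathbf{v}_k\in\mathcal{F}_k\ \forall k\}$. For a partition $\mathcal{P}=\{\mathcal{J}_1,\dots,\mathcal{J}_P\}$ of $\mathcal{K}$ and $\boldsymbol{\mu}_p\in\mathbb{R}^n$, the partition relaxation is $L_{\mathcal{P}}(\boldsymbol{\mu}_1,\dots,\boldsymbol{\mu}_P)=\sum_{p=1}^P\min\{\boldsymbol{\mu}_p^\top\mathbf{v}:\mathbf{v}\in\bigcap_{k\in\mathcal{J}_p}\mathcal{F}_k\}$; in particular $L_{\{\mathcal{K}\}}(\boldsymbol{\mu})=\min\{\boldsymbol{\mu}^\top\mathbf{v}:\mathbf{v}\in\bigcap_{k\in\mathcal{K}}\mathcal{F}_k\}$. Optimal Lagrange multipliers $\boldsymbol{\mu}^*_q$ of the hull relaxation means: $z^{HR}_{\mathcal{Q}}$ is finite and equals $\inf\{(\mathbf{c}-\sum_q\boldsymbol{\mu}_q^* )^\top\mathbf{x}+\sum_q\boldsymbol{\mu}_q^{*\top}\mathbf{v}_q:\mathbf{x}\in\mathbb{R}^n,\ \mathbf{v}_q\in\operatorname{cl}\operatorname{conv}(\mathcal{F}'_q)\}$.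 *)

(* Defs.v *)
(* Vectors of R^n are row vectors 'rV[R]_n
   over an abstract R : realType; optimal values live in the extended reals. *)
From HB Require Import structures.
From mathcomp Require Import all_boot all_order all_algebra.
From mathcomp Require Import all_classical all_reals all_analysis.
Unset Printing Implicit Defensive.
Import Order.TTheory GRing.Theory Num.Theory.
Import numFieldNormedType.Exports.
Local Open Scope classical_set_scope.
Local Open Scope ring_scope.

Section Defs.
Variables (R : realType) (n : nat).
Local Notation vec := 'rV[R]_n.

Definition dotp (u v : vec) : R := \sum_(i < n) u ord0 i * v ord0 i.

Definition convexR (A : set vec) : Prop :=
  forall x y (t : R), A x -> A y -> 0 <= t -> t <= 1 -> A (t *: x + (1 - t) *: y).

Definition conv_hull (A : set vec) : set vec :=
  \bigcap_(B in [set B | convexR B /\ A `<=` B]) B.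

Definition clconv (A : set vec) : set vec := closure (conv_hull A).

(* min / inf over a set of reals, with inf over the empty set = +oo *)
Definition einf (S : set R) : \bar R := ereal_inf [set x%:E | x in S].

Variables (K : nat) (D : 'I_K -> nat) (C : forall k : 'I_K, 'I_(D k) -> set vec).

Definition Fk (k : 'I_K) : set vec := [set v | exists i : 'I_(D k), C k i v].

Definition Fint (J : {set 'I_K}) : set vec :=
  [set v | forall k, k \in J -> Fk k v].

Definition Lfull (mu : vec) : \bar R :=
  einf [set dotp mu v | v in Fint [set: 'I_K]%SET].

Definition Lpart (P : nat) (J : 'I_P -> {set 'I_K}) (mu : 'I_P -> vec) : \bar R :=
  (\sum_(p < P) einf [set dotp (mu p) v | v in Fint (J p)])%E.

Definition LR (c : vec) (lam : 'I_K -> vec) : \bar R :=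
  einf [set r | exists (x : vec) (v : 'I_K -> vec),
          (forall k, Fk k (v k)) /\
          r = dotp (c - \sum_(k < K) lam k) x + \sum_(k < K) dotp (lam k) (v k)].

Definition zstar (c : vec) : \bar R := einf [set dotp c x | x in Fint [set: 'I_K]%SET].

Definition zHR (c : vec) (P : nat) (J : 'I_P -> {set 'I_K}) : \bar R :=
  einf [set dotp c x | x in [set x | exists v : 'I_P -> vec,
          forall q, x = v q /\ clconv (Fint (J q)) (v q)]].

Definition lagr (c : vec) (P : nat) (G : 'I_P -> set vec) (mu : 'I_P -> vec) : \bar R :=
  einf [set r | exists (x : vec) (v : 'I_P -> vec),
          (forall q, G q (v q)) /\
          r = dotp (c - \sum_(q < P) mu q) x + \sum_(q < P) dotp (mu q) (v q)].

Definition zLD (c : vec) (P : nat) (J : 'I_P -> {set 'I_K}) : \bar R :=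
  ereal_sup [set lagr c P (fun q => Fint (J q)) mu | mu in [set: 'I_P -> vec]].

Definition has_opt_multipliers (c : vec) (P : nat) (J : 'I_P -> {set 'I_K}) : Prop :=
  exists mu : 'I_P -> vec, zHR c P J \is a fin_num /\
    zHR c P J = lagr c P (fun q => clconv (Fint (J q))) mu.

End Defs.

Arguments dotp {R n}.
Arguments convexR {R n}.
Arguments conv_hull {R n}.
Arguments clconv {R n}.
Arguments einf {R}.
Arguments Fk {R n K D}.
Arguments Fint {R n K D}.
Arguments Lfull {R n K D}.
Arguments Lpart {R n K D} C {P}.
Arguments LR {R n K D}.
Arguments zstar {R n K D}.
Arguments zHR {R n K D} C c {P}.
Arguments lagr {R n} c {P}.
Arguments zLD {R n K D} C c {P}.
Arguments has_opt_multipliers {R n K D} C c {P}.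

(* Main.v *)
Require Import Defs.
From HB Require Import structures.
From mathcomp Require Import all_boot all_order all_algebra.
From mathcomp Require Import all_classical all_reals all_analysis.
From mathcomp Require Import lra.
Import Order.TTheory GRing.Theory Num.Theory.
Import numFieldNormedType.Exports.
Local Open Scope classical_set_scope.
Local Open Scope ring_scope.

Section Helpers.
Variables (R : realType) (n : nat).
Local Notation vec := 'rV[R]_n.

Lemma entry_le (x : vec) i : `|x ord0 i| <= `|x|.
Proof.
have -> : `|x| = mx_norm x by [].
rewrite mx_normE -[leLHS]nngE num_le.
exact: (le_bigmax _ _ (ord0, i)).
Qed.

Lemma dotpDl (u w v : vec) : dotp (u + w) v = dotp u v + dotp w v.
Proof. by rewrite /dotp -big_split; apply: eq_bigr => i _; rewrite mxE mulrDl. Qed.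
Lemma dotp0l (v : vec) : dotp 0 v = 0.
Proof. by rewrite /dotp big1 // => i _; rewrite mxE mul0r. Qed.
Lemma dotpNl (u v : vec) : dotp (- u) v = - dotp u v.
Proof. by rewrite /dotp -sumrN; apply: eq_bigr => i _; rewrite mxE mulNr. Qed.
Lemma dotpDr (u w v : vec) : dotp v (u + w) = dotp v u + dotp v w.
Proof. by rewrite /dotp -big_split; apply: eq_bigr => i _; rewrite mxE mulrDr. Qed.
Lemma dotpNr (u v : vec) : dotp v (- u) = - dotp v u.
Proof. by rewrite /dotp -sumrN; apply: eq_bigr => i _; rewrite mxE mulrN. Qed.
Lemma dotpZr a (u v : vec) : dotp v (a *: u) = a * dotp v u.
Proof. by rewrite /dotp mulr_sumr; apply: eq_bigr => i _; rewrite mxE mulrCA. Qed.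

Lemma dotp_suml (I : Type) (s : seq I) (Pr : pred I) (F : I -> vec) (v : vec) :
  dotp (\sum_(i <- s | Pr i) F i) v = \sum_(i <- s | Pr i) dotp (F i) v.
Proof.
elim/big_rec2: _ => [|i y1 y2 _ IH]; first exact: dotp0l.
by rewrite dotpDl IH.
Qed.

Lemma dotp_bound (mu u : vec) : `|dotp mu u| <= (\sum_i `|mu ord0 i|) * `|u|.
Proof.
rewrite /dotp mulr_suml; apply: le_trans (ler_norm_sum _ _ _) _.
apply: ler_sum => i _; rewrite normrM; apply: ler_wpM2l => //.
exact: entry_le.
Qed.

Lemma sub_conv (A : set vec) : A `<=` conv_hull A.
Proof. by move=> x Ax B [_ AB]; apply: AB. Qed.

Lemma sub_clconv (A : set vec) : A `<=` clconv A.
Proof. by move=> x Ax; apply: subset_closure; apply: sub_conv. Qed.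

Lemma clconv_approx (A : set vec) (mu v : vec) (d : R) : 0 < d -> clconv A v ->
  exists w, A w /\ dotp mu w <= dotp mu v + d.
Proof.
move=> d0 hv.
pose G := [set y : vec | forall e, 0 < e -> exists w, A w /\ dotp mu w <= dotp mu y + e].
have convG : convexR G.
  move=> y1 y2 t G1 G2 t0 t1 e e0.
  have [w1 [A1 h1]] := G1 e e0; have [w2 [A2 h2]] := G2 e e0.
  rewrite dotpDr !dotpZr.
  have [le12|lt21] := leP (dotp mu w1) (dotp mu w2).
    exists w1; split => //; nra.
  exists w2; split => //; nra.
have AG : A `<=` G.
  move=> y Ay e e0; exists y; split => //; rewrite lerDl; exact: ltW.
have cG : conv_hull A `<=` G by move=> y hy; apply: hy; split.
pose M := \sum_i `|mu ord0 i| + 1.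
have M0 : 0 < M by rewrite ltr_wpDl // sumr_ge0.
have e0 : 0 < d / 2 / M by rewrite !divr_gt0.
have [y [hy hb]] := hv _ (@nbhsx_ballx _ _ v _ e0).
have [w [Aw hw]] := cG y hy (d / 2) (divr_gt0 d0 (ltr0Sn _ 1)).
exists w; split => //.
move: hb; rewrite -ball_normE /= => hb.
have := dotp_bound mu (v - y); rewrite dotpDr dotpNr => hdb.
have h1 : (\sum_i `|mu ord0 i|) * `|v - y| <= d / 2.
  have -> : d / 2 = M * (d / 2 / M) by rewrite mulrCA mulfV ?mulr1 // gt_eqF.
  apply: ler_pM; [exact: sumr_ge0 | done | rewrite lerDl // | exact: ltW].
have := le_trans hdb h1; rewrite ler_norml => /andP[ha hc].
have : dotp mu w <= dotp mu v + (d / 2 + d / 2) by lra.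
by rewrite -splitr.
Qed.


Lemma compact_lb (S : set vec) (mu : vec) : compact S ->
  exists m, forall v, S v -> m <= dotp mu v.
Proof.
move=> /compact_bounded [M0 [_ HM]].
have := HM (`|M0| + 1) (lt_le_trans (ltr_pwDr ltr01 (lexx _)) (lerD (ler_norm _) (lexx _))).
move=> hS.
exists (- ((\sum_i `|mu ord0 i|) * (`|M0| + 1))) => v Sv.
have hv : `|v| <= `|M0| + 1 by exact: hS.
have := dotp_bound mu v; rewrite ler_norml => /andP[h1 _].
apply: le_trans h1; rewrite lerN2; apply: ler_wpM2l => //; exact: sumr_ge0.
Qed.

End Helpers.

Lemma partition_sum {V : zmodType} {K P} {J : 'I_P -> {set 'I_K}}
  {qof : 'I_K -> 'I_P} (qofE : forall k q, (qof k == q) = (k \in J q))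
  (F : 'I_K -> V) :
  \sum_(k < K) F k = \sum_(q < P) \sum_(k < K | k \in J q) F k.
Proof.
rewrite (partition_big qof predT) //=; apply: eq_bigr => q _.
by apply: eq_bigl => k; rewrite qofE.
Qed.

Theorem corollary2 (R : realType) (n K : nat) (c : 'rV[R]_n)
  (D : 'I_K -> nat) (C : forall k : 'I_K, 'I_(D k) -> set 'rV[R]_n)
  (hCcomp : forall k i, compact (C k i))
  (hCconv : forall k i, convexR (C k i))
  (lam : 'I_K -> 'rV[R]_n) (hlam : \sum_(k < K) lam k = c)
  (P : nat) (J : 'I_P -> {set 'I_K})
  (hJne : forall q, (0 < #|J q|)%N)
  (hJdisj : forall q q' k, k \in J q -> k \in J q' -> q = q')
  (hJcov : forall k, exists q, k \in J q) :
  let mu_P := fun q : 'I_P => \sum_(j < K | j \in J q) lam j in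
  zstar C c = Lfull C (\sum_(k < K) lam k) /\
  (zHR C c J <= Lfull C (\sum_(k < K) lam k))%E /\
  (zLD C c J <= zHR C c J)%E /\
  (Lpart C J mu_P <= zLD C c J)%E /\
  (LR C c lam <= Lpart C J mu_P)%E /\
  (has_opt_multipliers C c J -> zHR C c J = zLD C c J).
Proof.
move=> mu_P.
pose qof k := xchoose (hJcov k).
have qofP k : k \in J (qof k) := xchooseP (hJcov k).
have qofE k q : (qof k == q) = (k \in J q).
  apply/eqP/idP => [<-|kq]; first exact: qofP.
  exact: (hJdisj _ _ _ (qofP k) kq).
have hmu : \sum_(q < P) mu_P q = c by rewrite -hlam (partition_sum qofE).
have hdelta (e : R) : 0 < e -> (e / P.+1%:R) *+ P <= e.
  move=> e0; rewrite -mulr_natl mulrA ler_pdivrMr ?ltr0Sn //.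
  by rewrite -natr1 mulrDr mulr1 mulrC lerDl ltW.
have hd0 (e : R) : 0 < e -> 0 < e / P.+1%:R by move=> e0; rewrite divr_gt0 ?ltr0Sn.
have p3 : (zLD C c J <= zHR C c J)%E.
  apply: ge_ereal_sup => _ [mu _ <-].
  apply: le_ereal_inf_tmp => _ [_ [x [v hv] <-] <-].
  apply/lee_addgt0Pr => e e0.
  have hw : forall q, exists w, Fint C (J q) w /\
      dotp (mu q) w <= dotp (mu q) (v q) + e / P.+1%:R.
    move=> q; apply: clconv_approx; first exact: hd0.
    by case: (hv q).
  have [w hw'] := choice hw.
  apply: (@le_trans _ _ (dotp (c - \sum_(q < P) mu q) x
              + \sum_(q < P) dotp (mu q) (w q))%:E).
    apply: ereal_inf_lbound; exists (dotp (c - \sum_(q < P) mu q) x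
              + \sum_(q < P) dotp (mu q) (w q)) => //.
    by exists x, w; split => // q; case: (hw' q).
  rewrite -EFinD lee_fin.
  have hs : \sum_(q < P) dotp (mu q) (w q) <=
            \sum_(q < P) (dotp (mu q) x + e / P.+1%:R).
    apply: ler_sum => q _; case: (hw' q) => _ h; case: (hv q) => hx _; by rewrite hx.
  rewrite big_split /= sumr_const card_ord -dotp_suml in hs.
  have := hdelta e e0.
  rewrite dotpDl dotpNl.
  move: hs; set t := (e / P.+1%:R *+ P); set A := dotp (\sum_(i < P) mu i) x; set B := \sum_(q < P) dotp (mu q) (w q); move=> hs hd. lra.
split; first by rewrite /zstar /Lfull hlam.
split.
  rewrite hlam; apply: le_ereal_inf_tmp => _ [_ [x hx <-] <-].
  apply: ereal_inf_lbound; exists (dotp c x) => //; exists x => //.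
  by exists (fun=> x) => q; split => //; apply: sub_clconv => k _; apply: hx.
split; first exact: p3.
split.
  apply: (@le_trans _ _ (lagr c (fun q => Fint C (J q)) mu_P)); last first.
    by apply: ereal_sup_ubound; exists mu_P.
  apply: le_ereal_inf_tmp => _ [r [x [v [hv ->]]] <-].
  rewrite hmu subrr dotp0l add0r -sumEFin /Lpart.
  apply: lee_sum => q _.
  apply: ereal_inf_lbound; exists (dotp (mu_P q) (v q)) => //.
  by exists (v q).
split.
  pose a q := einf [set dotp (mu_P q) v | v in Fint C (J q)].
  have aNy q : a q != -oo%E.
    have /card_gt0P [k kJ] := hJne q.
    have hb : forall i : 'I_(D k), exists m, forall v, C k i v -> m <= dotp (mu_P q) v.
      by move=> i; apply: compact_lb.
    have [m hm] := choice hb.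
    have lb : ((- \sum_i `|m i|)%:E <= a q)%E.
      apply: le_ereal_inf_tmp => _ [_ [v hv <-] <-].
      rewrite lee_fin.
      have [i Ci] := hv k kJ.
      apply: le_trans _ (hm i v Ci).
      have h1 : `|m i| <= \sum_i0 `|m i0|.
        by rewrite (bigD1 i) //= lerDl sumr_ge0.
      have := ler_norm (- m i); rewrite normrN => h2.
      lra.
    by apply/negP => /eqP ha; move: lb; rewrite ha leeNy_eq.
  have -> : Lpart C J mu_P = (\sum_(q < P) a q)%E by [].
  case: (boolP [exists q, a q == +oo%E]) => hy.
    have /eqP -> : (\sum_(q < P) a q == +oo)%E.
      by rewrite esum_eqy // => q _; exact: aNy.
    exact: leey.
  have afin q : a q \is a fin_num.
    rewrite fin_numE aNy /=; apply/negP => hq; move/negP: hy; apply.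
    by apply/existsP; exists q.
  apply/lee_addgt0Pr => e e0.
  have hw : forall q, exists w, Fint C (J q) w /\
      dotp (mu_P q) w < fine (a q) + e / P.+1%:R.
    move=> q.
    have [_ [_ [w hw <-] <-] hlt] := lb_ereal_inf_adherent (hd0 e e0) (afin q).
    exists w; split => //.
    by move: hlt; rewrite -[X in (_ < X + _)%E](fineK (afin q)) -EFinD lte_fin.
  have [w hw'] := choice hw.
  apply: (@le_trans _ _ (dotp (c - \sum_(k < K) lam k) 0
              + \sum_(k < K) dotp (lam k) (w (qof k)))%:E).
    apply: ereal_inf_lbound; exists (dotp (c - \sum_(k < K) lam k) 0
              + \sum_(k < K) dotp (lam k) (w (qof k))) => //.
    exists 0, (fun k => w (qof k)); split => // k.
    by case: (hw' (qof k)) => h _; apply: h; exact: qofP.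
  rewrite (eq_bigr (fun q => (fine (a q))%:E)); last first.
    by move=> q _; rewrite fineK.
  rewrite sumEFin -EFinD lee_fin hlam subrr dotp0l add0r.
  rewrite (partition_sum qofE).
  have -> : \sum_(q < P) \sum_(k < K | k \in J q) dotp (lam k) (w (qof k))
          = \sum_(q < P) dotp (mu_P q) (w q).
    apply: eq_bigr => q _; rewrite /mu_P dotp_suml.
    by apply: eq_bigr => k kq; have /eqP -> : qof k == q by rewrite qofE.
  have hs : \sum_(q < P) dotp (mu_P q) (w q) <=
            \sum_(q < P) (fine (a q) + e / P.+1%:R).
    by apply: ler_sum => q _; case: (hw' q) => _ h; apply: ltW.
  rewrite big_split /= sumr_const card_ord in hs.
  have := hdelta e e0.
  move: hs; set t := (e / P.+1%:R *+ P); set A := \sum_(q < P) fine (a q); set B := \sum_(q < P) dotp (mu_P q) (w q); move=> hs hd. lra.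
move=> [mu [hfin heq]].
apply/eqP; rewrite eq_le p3 andbT heq.
apply: (@le_trans _ _ (lagr c (fun q => Fint C (J q)) mu)); last first.
  by apply: ereal_sup_ubound; exists mu.
apply: le_ereal_inf_tmp => _ [r [x [v [hv ->]]] <-].
apply: ereal_inf_lbound; exists (dotp (c - \sum_(q < P) mu q) x
              + \sum_(q < P) dotp (mu q) (v q)) => //.
by exists x, v; split => // q; apply: sub_clconv; exact: hv.
Qed.
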